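(* Let $X=\Delta[2]/\partial\Delta[2]$. Then $DSd\,X\cong\Delta[1]$.
   Context: $Sd$ is the Kan (normal) subdivision functor on simplicial sets: the left Kan extension along the Yoneda embedding of $[n]\mapsto N(\text{poset of non-empty subsets of }[n])$; it commutes with colimits and preserves degreewise injective maps. $\Delta[2]/\partial\Delta[2]$ is the pushout of $\Delta[0]\leftarrow\partial\Delta[2]\to\Delta[2]$. A simplicial set is non-singular if every non-degenerate simplex has degreewise injective representing map. The desingularization $DY$ is the image of $Y\to\prod_f Z$, $y\mapsto(f(y))_f$, over all quotient maps $f:Y\to Z$ (maps $Y\to Y/R$ for operator-compatible families of equivalence relations) with $Z$ non-singular. *)

(* Defs.v *)
From Stdlib Require Import Relation_Definitions ClassicalEpsilon FunctionalExtensionality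
     PropExtensionality ProofIrrelevance Relation_Operators.
From mathcomp Require Import all_boot.

Set Implicit Arguments.
Unset Strict Implicit.
Unset Printing Implicit Defensive.

(* The simplex category: morphisms [m] -> [n] are monotone maps        *)
(* 'I_m.+1 -> 'I_n.+1.                                                  *)
Definition ord_mono m n (f : 'I_m.+1 -> 'I_n.+1) :=
  forall i j : 'I_m.+1, i <= j -> f i <= f j.

Record Hom (m n : nat) := MkHom { homf :> 'I_m.+1 -> 'I_n.+1; homP : ord_mono homf }.

Lemma ord_mono_id n : ord_mono (fun i : 'I_n.+1 => i).
Proof. by []. Qed.

Definition hom_id n : Hom n n := MkHom (@ord_mono_id n).

Lemma ord_mono_comp m n p (g : Hom n p) (f : Hom m n) : ord_mono (fun i => g (f i)).
Proof. by move=> i j le; apply: (homP g); apply: (homP f). Qed.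

Definition hom_comp m n p (g : Hom n p) (f : Hom m n) : Hom m p :=
  MkHom (ord_mono_comp g f).

(* Simplicial sets: X_n together with the contravariant action of the  *)
(* simplex category; the functoriality laws are recorded by the        *)
(* predicate [is_simplicial].                                          *)
Record sSet := MkSSet {
  simp :> nat -> Type;
  sact : forall m n, Hom m n -> simp n -> simp m }.
Arguments sact {s m n}.

Definition is_simplicial (X : sSet) :=
  (forall n (x : X n), sact (hom_id n) x = x) /\
  (forall m n p (f : Hom m n) (g : Hom n p) (x : X p),
      sact (hom_comp g f) x = sact f (sact g x)).

Record smap (X Y : sSet) := MkSMap {
  smapf :> forall n, X n -> Y n;
  smap_nat : forall m n (f : Hom m n) (x : X n), smapf (sact f x) = sact f (smapf x) }.

Definition sIso (X Y : sSet) : Prop :=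
  exists (f : smap X Y) (g : smap Y X),
    (forall n (x : X n), g n (f n x) = x) /\ (forall n (y : Y n), f n (g n y) = y).

Definition quot (T : Type) (R : T -> T -> Prop) := {P : T -> Prop | exists x, P = R x}.

Definition cls (T : Type) (R : T -> T -> Prop) (x : T) : quot R :=
  exist _ (R x) (ex_intro _ x erefl).

Definition rep (T : Type) (R : T -> T -> Prop) (P : quot R) : T :=
  proj1_sig (constructive_indefinite_description _ (proj2_sig P)).

Definition eqv_gen (T : Type) (R : T -> T -> Prop) := clos_refl_sym_trans T R.

Definition Delta (n : nat) : sSet :=
  @MkSSet (fun k => Hom k n) (fun m k (t : Hom m k) (f : Hom k n) => hom_comp f t).

Definition not_surj k n (f : Hom k n) := exists i : 'I_n.+1, forall j, f j != i.

Lemma not_surj_comp m k n (t : Hom m k) (f : Hom k n) :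
  not_surj f -> not_surj (hom_comp f t).
Proof. by case=> i Hi; exists i => j; apply: Hi. Qed.

Definition bDelta (n : nat) : sSet :=
  @MkSSet (fun k => {f : Hom k n | not_surj f})
    (fun m k (t : Hom m k) f =>
       exist _ (hom_comp (proj1_sig f) t) (not_surj_comp t (proj2_sig f))).

Definition bincl n : forall k, bDelta n k -> Delta n k := fun k f => proj1_sig f.

Lemma ord_mono_const0 k : ord_mono (fun _ : 'I_k.+1 => (ord0 : 'I_1)).
Proof. by []. Qed.
Definition to_pt (X : sSet) : forall k, X k -> Delta 0 k :=
  fun k _ => MkHom (@ord_mono_const0 k).

Definition pushout_rel (C A B : sSet) (f : forall k, C k -> A k)
  (g : forall k, C k -> B k) k : (A k + B k)%type -> (A k + B k)%type -> Prop :=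
  eqv_gen (fun u v => exists c : C k, u = inl (f k c) /\ v = inr (g k c)).

Arguments pushout_rel {C A B} f g k.

Definition sum_act (A B : sSet) m k (t : Hom m k) (u : (A k + B k)%type)
  : (A m + B m)%type :=
  match u with inl a => inl (sact t a) | inr b => inr (sact t b) end.

Definition pushout (C A B : sSet) (f : forall k, C k -> A k)
  (g : forall k, C k -> B k) : sSet :=
  @MkSSet (fun k => quot (pushout_rel f g k))
    (fun m k t P => cls _ (sum_act t (rep P))).

Definition X2 : sSet := pushout (@to_pt (bDelta 2)) (@bincl 2).

(* Kan's normal subdivision Sd, as the left Kan extension of           *)
(* [n] |-> N(poset of non-empty subsets of [n]) along Yoneda, i.e. the  *)
(* coend (Sd X)_k = (sum_n X_n x N(P[n])_k) / ~ .                       *)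
(* k-simplices of the nerve of the poset of non-empty subsets of [n]    *)
Record Chain (k n : nat) := MkChain {
  chf :> 'I_k.+1 -> {set 'I_n.+1};
  ch_ne : forall i, chf i != set0;
  ch_mono : forall i j : 'I_k.+1, i <= j -> chf i \subset chf j }.

Lemma chain_pre_ne k' k n (t : Hom k' k) (c : Chain k n) i : c (t i) != set0.
Proof. exact: ch_ne. Qed.
Lemma chain_pre_mono k' k n (t : Hom k' k) (c : Chain k n) (i j : 'I_k'.+1) :
  i <= j -> c (t i) \subset c (t j).
Proof. by move=> le; apply: ch_mono; apply: homP. Qed.
Definition chain_pre k' k n (t : Hom k' k) (c : Chain k n) : Chain k' n :=
  MkChain (chain_pre_ne t c) (chain_pre_mono t c).

Lemma chain_push_ne k m n (th : Hom m n) (c : Chain k m) i : th @: c i != set0.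
Proof.
apply/set0Pn; case/set0Pn: (ch_ne c i) => x Hx; exists (th x).
exact: imset_f.
Qed.
Lemma chain_push_mono k m n (th : Hom m n) (c : Chain k m) (i j : 'I_k.+1) :
  i <= j -> th @: c i \subset th @: c j.
Proof. by move=> le; apply: imsetS; apply: ch_mono. Qed.
Definition chain_push k m n (th : Hom m n) (c : Chain k m) : Chain k n :=
  MkChain (chain_push_ne th c) (chain_push_mono th c).

Definition Sd_pre (X : sSet) (k : nat) := {n : nat & (X n * Chain k n)%type}.

Definition Sd_rel (X : sSet) (k : nat) : Sd_pre X k -> Sd_pre X k -> Prop :=
  eqv_gen (fun u v => exists m n (th : Hom m n) (x : X n) (c : Chain k m),
              u = existT _ m (sact th x, c) /\ v = existT _ n (x, chain_push th c)).

Arguments Sd_rel : clear implicits.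

Definition Sd_act (X : sSet) k' k (t : Hom k' k) (u : Sd_pre X k) : Sd_pre X k' :=
  existT _ (projT1 u) ((projT2 u).1, chain_pre t (projT2 u).2).

Definition Sd (X : sSet) : sSet :=
  @MkSSet (fun k => quot (Sd_rel X k))
    (fun k' k t P => cls _ (Sd_act t (rep P))).

Definition degenerate (Y : sSet) n (y : Y n) :=
  exists m (s : Hom n m) (z : Y m), m < n /\ y = sact s z.

(* the representing map Delta[n] -> Y of y is degreewise injective *)
Definition nonsingular (Y : sSet) :=
  forall n (y : Y n), ~ degenerate y ->
    forall k (f g : Hom k n), sact f y = sact g y -> f = g.

Definition compat_equiv (Y : sSet) (R : forall n, Y n -> Y n -> Prop) :=
  (forall n, equivalence (Y n) (R n)) /\
  (forall m n (t : Hom m n) (y y' : Y n), R n y y' -> R m (sact t y) (sact t y')).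

Arguments compat_equiv : clear implicits.

Definition quotS (Y : sSet) (R : forall n, Y n -> Y n -> Prop) : sSet :=
  @MkSSet (fun n => quot (R n)) (fun m n t P => cls _ (sact t (rep P))).

Arguments quotS : clear implicits.

(* Desingularization: image of Y -> prod_f Z over all quotient maps     *)
(* f : Y -> Y/R with Y/R non-singular.                                  *)
Definition DIndex (Y : sSet) :=
  {R : forall n, Y n -> Y n -> Prop | compat_equiv Y R /\ nonsingular (quotS Y R)}.

Definition DProd (Y : sSet) : sSet :=
  @MkSSet (fun n => forall i : DIndex Y, quotS Y (proj1_sig i) n)
    (fun m n t p => fun i => sact t (p i)).

Definition Dmap (Y : sSet) n (y : Y n) : DProd Y n :=
  fun i => cls _ y.

Lemma Dmap_nat (Y : sSet) m n (t : Hom m n) (y : Y n) :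
  sact (s := DProd Y) t (Dmap y) = Dmap (sact t y).
Proof.
apply: functional_extensionality_dep => -[R [[Heq Hc] Hns]] /=.
rewrite /Dmap /cls /rep /=.
case: (constructive_indefinite_description _ _) => z Hz /=.
have Ryz : R n y z.
  by rewrite Hz; case: (Heq n) => refl _ _; apply: refl.
have Rt := Hc m n t y z Ryz.
case: (Heq m) => _ trans sym.
have E : R m (sact t z) = R m (sact t y).
  apply: functional_extensionality => w; apply: propositional_extensionality; split.
  - by move=> H; apply: trans Rt H.
  - by move=> H; apply: trans (sym _ _ Rt) H.
by apply: eq_sig_hprop => [P p q|]; [apply: proof_irrelevance | rewrite /= E].
Qed.

Definition Dact (Y : sSet) m n (t : Hom m n)
  (p : {p : DProd Y n | exists y, p = Dmap y}) : {p : DProd Y m | exists y, p = Dmap y} :=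
  exist _ (sact t (proj1_sig p))
    (match proj2_sig p with ex_intro y Hy =>
       ex_intro _ (sact t y) (eq_trans (f_equal (sact t) Hy) (Dmap_nat t y)) end).

Definition Desing (Y : sSet) : sSet :=
  @MkSSet (fun n => {p : DProd Y n | exists y, p = Dmap y}) (@Dact Y).

(* Main.v *)
Require Import Defs.
From mathcomp Require Import all_boot zify.
From Stdlib Require Import Relation_Definitions Relation_Operators Operators_Properties
  ClassicalEpsilon FunctionalExtensionality PropExtensionality ProofIrrelevance Classical.

Set Implicit Arguments.
Unset Strict Implicit.
Unset Printing Implicit Defensive.

Lemma hom_eq m n (f g : Hom m n) : (forall i, f i = g i) -> f = g.
Proof.
case: f g => f Hf [g Hg] /= E.
have E' : f = g by apply: functional_extensionality.
subst; f_equal; apply: proof_irrelevance.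
Qed.

Lemma chain_eq k n (c d : Chain k n) : (forall i, c i = d i) -> c = d.
Proof.
case: c d => c H1 H2 [d H3 H4] /= E.
have E' : c = d by apply: functional_extensionality.
subst; f_equal; apply: proof_irrelevance.
Qed.

Section Quot.
Variables (T : Type) (R : T -> T -> Prop) (HR : equivalence T R).

Lemma rep_cls x : R x (rep (cls R x)).
Proof.
rewrite /rep; case: (constructive_indefinite_description _ _) => z /= Hz.
have : R x z by rewrite Hz; apply: (equiv_refl _ _ HR).
done.
Qed.

Lemma cls_eq x y : R x y -> cls R x = cls R y.
Proof.
move=> Hxy; rewrite /cls.
have E : R x = R y.
  apply: functional_extensionality => w; apply: propositional_extensionality; split.
  - move=> H; apply: (equiv_trans _ _ HR) H; exact: (equiv_sym _ _ HR).
  - move=> H; exact: (equiv_trans _ _ HR) Hxy H.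
by apply: eq_sig_hprop => [P p q|]; [apply: proof_irrelevance | rewrite /= E].
Qed.

Lemma cls_inj x y : cls R x = cls R y -> R x y.
Proof.
move=> E; have : proj1_sig (cls R x) y by rewrite E /=; apply: (equiv_refl _ _ HR).
done.
Qed.

Lemma cls_rep (P : quot R) : cls R (rep P) = P.
Proof.
rewrite /rep; case: (constructive_indefinite_description _ _) => z /= Hz.
case: P Hz => P HP /= Hz; subst.
by apply: eq_sig_hprop => [Q p q|]; [apply: proof_irrelevance | ].
Qed.

Lemma quot_ind (P : quot R -> Prop) : (forall x, P (cls R x)) -> forall q, P q.
Proof. by move=> H q; rewrite -(cls_rep q). Qed.
End Quot.

Definition cst n (j : 'I_n.+1) : Hom 0 n := @MkHom 0 n (fun _ => j) (fun _ _ _ => leqnn _).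

Lemma EZ (Z : sSet) : is_simplicial Z -> forall n (z : Z n),
  exists m (s : Hom n m) (w : Z m), z = sact s w /\ ~ degenerate w.
Proof.
move=> [Hid Hcomp]; elim/ltn_ind => n IH z.
case: (classic (degenerate z)) => Hd; last by exists n, (hom_id n), z; rewrite Hid.
case: Hd => m [s [z' [Hm ->]]].
case: (IH m Hm z') => m' [s' [w [-> Hw]]].
by exists m', (hom_comp s' s), w; rewrite Hcomp.
Qed.

Lemma NS (Z : sSet) : is_simplicial Z -> nonsingular Z ->
  forall n (z : Z n) k (f g : Hom k n),
  (forall i, sact (cst (f i)) z = sact (cst (g i)) z) -> sact f z = sact g z.
Proof.
move=> Hs Hns n z k f g Hv.
case: (EZ Hs z) => m [s [w [Ez Hw]]]; subst z.
case: Hs => Hid Hcomp.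
rewrite -!Hcomp; congr sact; apply: hom_eq => i /=.
have := Hv i; rewrite -!Hcomp => /(Hns _ _ Hw) E.
by have := f_equal (fun h : Hom 0 m => h ord0) E.
Qed.

Lemma rst_inv (T U : Type) (R : T -> T -> Prop) (f : T -> U) :
  (forall x y, R x y -> f x = f y) ->
  forall u v, clos_refl_sym_trans T R u v -> f u = f v.
Proof.
move=> H u v; elim.
- exact: H.
- by [].
- by move=> x y _ E; rewrite E.
- by move=> x y z _ E1 _ E2; rewrite E1 E2.
Qed.

Lemma rst_map (T U : Type) (R : T -> T -> Prop) (S : U -> U -> Prop) (f : T -> U) :
  (forall x y, R x y -> S (f x) (f y)) ->
  forall u v, clos_refl_sym_trans T R u v -> clos_refl_sym_trans U S (f u) (f v).
Proof.
move=> H u v; elim.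
- by move=> x y Hxy; apply: rst_step; apply: H.
- by move=> x; apply: rst_refl.
- by move=> x y _ E; apply: rst_sym.
- by move=> x y z _ E1 _ E2; apply: rst_trans E1 E2.
Qed.

Lemma I1_eq (a b : 'I_1) : a = b.
Proof. by apply: val_inj; case: a b => [[|//] ?] [[|//] ?]. Qed.


Notation PR k := (pushout_rel (@to_pt (bDelta 2)) (@bincl 2) k).

Lemma PR_equiv k : equivalence _ (PR k).
Proof. exact: clos_rst_is_equiv. Qed.

Definition surjb n (s : Hom n 2) := [forall j : 'I_3, exists i, s i == j].

Definition qf k (u : (Delta 0 k + Delta 2 k)%type) : option (Hom k 2) :=
  match u with inl _ => None | inr s => if surjb s then Some s else None end.

Lemma notsurj_b n (s : Hom n 2) : not_surj s -> surjb s = false.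
Proof.
case=> j Hj; apply/negP => /forallP /(_ j) /existsP [i /eqP Hi].
by move: (Hj i); rewrite Hi eqxx.
Qed.

Lemma qf_rel k u v : PR k u v -> qf u = qf v.
Proof.
apply: rst_inv => x y [c [-> ->]] /=; rewrite /bincl.
by case: c => s Hs /=; rewrite notsurj_b.
Qed.

Definition iota2 : X2 2 := cls (PR 2) (inr (hom_id 2)).

Lemma rep_iota : rep iota2 = inr (hom_id 2).
Proof.
have H := rep_cls (PR_equiv 2) (inr (hom_id 2)).
have := qf_rel H; rewrite /=.
have -> : surjb (hom_id 2) by apply/forallP => j; apply/existsP; exists j.
rewrite /iota2; case: (rep _) => //= s.
by case: (surjb s) => // [[->]].
Qed.

Lemma act_iota n (s : Hom n 2) : sact s iota2 = cls (PR n) (inr s).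
Proof.
rewrite /= rep_iota /=; congr (cls _ (inr _)); exact: hom_eq.
Qed.

Lemma sum_act_rel m k (t : Hom m k) u v : PR k u v ->
  PR m (sum_act t u) (sum_act t v).
Proof.
apply: rst_map => x y [c [-> ->]] /=.
exists (sact t c); split; last by [].
by congr inl; apply: hom_eq => i; apply: I1_eq.
Qed.

Definition bp n : X2 n := cls (PR n) (inl (MkHom (@ord_mono_const0 n))).

Lemma notsurj_bp n (s : Hom n 2) : not_surj s -> sact s iota2 = bp n.
Proof.
move=> Hs; rewrite act_iota /bp; apply: cls_eq; first exact: PR_equiv.
apply: rst_sym; apply: rst_step.
exists (exist _ s Hs); split => //.
Qed.

Lemma cst0_mono n : ord_mono (fun _ : 'I_n.+1 => (ord0 : 'I_3)).
Proof. by []. Qed.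
Definition cst0 n : Hom n 2 := MkHom (@cst0_mono n).
Lemma cst0_ns n : not_surj (cst0 n).
Proof. by exists ord_max. Qed.

Lemma X2_gen n (x : X2 n) : exists s : Hom n 2, x = sact s iota2.
Proof.
rewrite -(cls_rep x).
case E: (rep x) => [p|s].
- exists (cst0 n); rewrite notsurj_bp; last exact: cst0_ns.
  rewrite /bp; congr (cls _ (inl _)); apply: hom_eq => i; apply: I1_eq.
- by exists s; rewrite act_iota.
Qed.

Definition fullw k (u : (Delta 0 k + Delta 2 k)%type) (S : {set 'I_k.+1}) : bool :=
  match u with inl _ => false | inr s => [set homf s i | i in S] == setT end.

Lemma fullw_ns k (s : Hom k 2) (S : {set 'I_k.+1}) : not_surj s -> ([set homf s i | i in S] == setT) = false.
Proof.
case=> j Hj; apply/negP => /eqP E.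
have : j \in [set homf s i | i in S] by rewrite E inE.
by case/imsetP => i _ Ei; move: (Hj i); rewrite -Ei eqxx.
Qed.

Lemma fullw_rel k u v S : PR k u v -> fullw u S = fullw v S.
Proof.
apply: (rst_inv (f := fun w => fullw w S)) => x y [c [-> ->]] /=; rewrite /bincl.
by case: c => s Hs /=; rewrite fullw_ns.
Qed.

Definition fullx k (x : X2 k) S := fullw (rep x) S.

Lemma fullx_cls k u S : fullx (cls (PR k) u) S = fullw u S.
Proof. rewrite /fullx; apply: fullw_rel; apply: rst_sym; exact: rep_cls (PR_equiv k) u. Qed.

Lemma fullx_act m k (t : Hom m k) (x : X2 k) S :
  fullx (sact t x) S = fullx x [set homf t i | i in S].
Proof.
rewrite /= fullx_cls /fullx; case: (rep x) => //= s.
by rewrite -imset_comp.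
Qed.

Lemma fullx_iota S : fullx iota2 S = (S == setT).
Proof. by rewrite /fullx rep_iota /= imset_id. Qed.

Lemma fullx_mono k (x : X2 k) (S S' : {set 'I_k.+1}) : S \subset S' -> fullx x S -> fullx x S'.
Proof.
rewrite /fullx; case: (rep x) => //= s HS /eqP E.
by rewrite eqEsubset subsetT /= -E; apply: imsetS.
Qed.


Section SdGen.
Variable X : sSet.

Lemma Sd_equiv k : equivalence _ (Sd_rel X k).
Proof. exact: clos_rst_is_equiv. Qed.

Lemma Sd_act_rel k' k (t : Hom k' k) u v : Sd_rel X k u v ->
  Sd_rel X k' (Sd_act t u) (Sd_act t v).
Proof.
apply: rst_map => x y [m [n [th [z [c [-> ->]]]]]] /=.
exists m, n, th, z, (chain_pre t c); split => //.
by congr existT; congr pair; apply: chain_eq.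
Qed.

Lemma Y_act_cls k' k (t : Hom k' k) u :
  sact (s := Sd X) t (cls (Sd_rel X k) u) = cls (Sd_rel X k') (Sd_act t u).
Proof.
rewrite /=; apply: cls_eq; first exact: Sd_equiv.
apply: Sd_act_rel; apply: rst_sym; exact: rep_cls (Sd_equiv k) u.
Qed.

Lemma Y_simp : is_simplicial (Sd X).
Proof.
split.
- move=> n; apply: quot_ind => u; rewrite Y_act_cls; congr cls.
  by case: u => m [x c] /=; congr existT; congr pair; apply: chain_eq.
- move=> m n p f g; apply: quot_ind => u; rewrite !Y_act_cls; congr cls.
  by case: u => q [x c] /=; congr existT; congr pair; apply: chain_eq.
Qed.
End SdGen.

Notation Y := (Sd X2).

Definition y2 k (c : Chain k 2) : Y k :=
  cls (Sd_rel X2 k) (existT (fun n => (X2 n * Chain k n)%type) 2 (iota2, c)).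

Lemma Y_act_y2 k' k (t : Hom k' k) (c : Chain k 2) :
  sact (s := Y) t (y2 c) = y2 (chain_pre t c).
Proof. by rewrite /y2 Y_act_cls. Qed.

Lemma Y_gen k (y : Y k) : exists d : Chain k 2, y = y2 d.
Proof.
rewrite -(cls_rep y); case: (rep y) => n [x c].
case: (X2_gen x) => s ->.
exists (chain_push s c); apply: cls_eq; first exact: Sd_equiv.
apply: rst_step; by exists n, 2, s, iota2, c.
Qed.

Definition phi_pre k (u : Sd_pre X2 k) (i : 'I_k.+1) : bool :=
  fullx (projT2 u).1 ((projT2 u).2 i).

Lemma phi_pre_rel k u v : Sd_rel X2 k u v -> phi_pre u = phi_pre v.
Proof.
apply: rst_inv => x y [m [n [th [z [c [-> ->]]]]]] /=.
by apply: functional_extensionality => i; rewrite /phi_pre /= fullx_act.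
Qed.

Definition phib k (y : Y k) := phi_pre (rep y).

Lemma phib_cls k u : phib (cls (Sd_rel X2 k) u) = phi_pre u.
Proof. apply: phi_pre_rel; apply: rst_sym; exact: rep_cls (Sd_equiv _ _) u. Qed.

Lemma phib_mono k (y : Y k) (i j : 'I_k.+1) : i <= j -> phib y i -> phib y j.
Proof.
move=> le; rewrite /phib /phi_pre; apply: fullx_mono; exact: ch_mono.
Qed.

Definition hob_f k (b : 'I_k.+1 -> bool) (i : 'I_k.+1) : 'I_2 :=
  if b i then ord_max else ord0.

Lemma hob_mono k (b : 'I_k.+1 -> bool) :
  (forall i j : 'I_k.+1, i <= j -> b i -> b j) -> ord_mono (hob_f b).
Proof.
move=> H i j le; rewrite /hob_f; case Ei: (b i); last by [].
by rewrite (H _ _ le Ei).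
Qed.

Definition phi k (y : Y k) : Hom k 1 := MkHom (hob_mono (@phib_mono k y)).

Lemma phi_val k (y : Y k) i : (phi y i != ord0) = phib y i.
Proof. by rewrite /= /hob_f; case: (phib y i). Qed.

Lemma I2_eq (a b : 'I_2) : (a != ord0) = (b != ord0) -> a = b.
Proof.
case: a b => [[|[|//]] p1] [[|[|//]] p2] //= _; by apply: val_inj.
Qed.

Lemma hom1_eq k (h h' : Hom k 1) : (forall i, (h i != ord0) = (h' i != ord0)) -> h = h'.
Proof. by move=> H; apply: hom_eq => i; apply: I2_eq. Qed.

Lemma phi_act k' k (t : Hom k' k) (y : Y k) :
  phi (sact t y) = hom_comp (phi y) t.
Proof.
apply: hom1_eq => i; rewrite phi_val /= phi_val.
by rewrite (phib_cls (Sd_act t (rep y))).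
Qed.

Lemma phi_y2 k (d : Chain k 2) i : (phi (y2 d) i != ord0) = (d i == setT).
Proof. by rewrite phi_val /y2 phib_cls /phi_pre /= fullx_iota. Qed.


Lemma fin3 (T : {set 'I_3}) : T != set0 -> T != setT ->
  exists a b : 'I_3, a <= b /\ T = [set a; b].
Proof.
move=> /set0Pn [i0 Hi0] HT.
have [a Ha Hamin] := arg_minnP (fun i : 'I_3 => (i : nat)) Hi0.
have [b Hb Hbmax] := arg_maxnP (fun i : 'I_3 => (i : nat)) Hi0.
exists a, b; split; first exact: Hamin.
apply/setP => x; rewrite !inE; apply/idP/idP; last by case/orP => /eqP ->.
move=> Hx; apply/negPn/negP; rewrite negb_or => /andP [/eqP xa /eqP xb].
have ax := Hamin x Hx; have xb' := Hbmax x Hx.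
have xa' : (x : nat) != a by apply/eqP => E; apply: xa; apply: val_inj.
have xb'' : (x : nat) != b by apply/eqP => E; apply: xb; apply: val_inj.
case/negP: HT; apply/eqP/setP => y; rewrite !inE.
have ya : (y : nat) = a \/ (y : nat) = x \/ (y : nat) = b.
  have := ltn_ord a; have := ltn_ord b; have := ltn_ord x; have := ltn_ord y. lia.
case: ya => [E|[E|E]].
- by rewrite (_ : y = a) //; apply: val_inj.
- by rewrite (_ : y = x) //; apply: val_inj.
- by rewrite (_ : y = b) //; apply: val_inj.
Qed.

Lemma setT_ne n : [set: 'I_n.+1] != set0.
Proof. by apply/set0Pn; exists ord0; rewrite inE. Qed.

Lemma c1_ne (i : 'I_1) : [set: 'I_2] != set0.
Proof. exact: setT_ne. Qed.
Lemma c1_mono (i j : 'I_1) : i <= j -> [set: 'I_2] \subset [set: 'I_2].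
Proof. by []. Qed.
Definition c1 : Chain 0 1 := MkChain c1_ne c1_mono.

Definition star : Y 0 :=
  cls (Sd_rel X2 0) (existT (fun n => (X2 n * Chain 0 n)%type) 1 (bp 1, c1)).

Definition th2_f (a b : 'I_3) (i : 'I_2) : 'I_3 := if i == ord0 then a else b.
Lemma th2_mono (a b : 'I_3) : a <= b -> ord_mono (th2_f a b).
Proof.
move=> ab [[|[|//]] p1] [[|[|//]] p2] //=.
Qed.

Lemma vert_star (c : Chain 0 2) : c ord0 != setT -> y2 c = star.
Proof.
move=> Hc; case: (fin3 (ch_ne c ord0) Hc) => a [b [ab E]].
pose th := MkHom (th2_mono ab).
have Eimg : [set homf th i | i in [set: 'I_2]] = [set a; b].
  apply/setP => x; rewrite !inE; apply/imsetP/orP.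
  - case=> i _ ->; rewrite /= /th2_f; case: (i == ord0); by [left|right].
  - by case=> /eqP ->; [exists ord0 | exists ord_max].
have Ech : chain_push th c1 = c.
  by apply: chain_eq => i; rewrite (I1_eq i ord0) /= Eimg E.
have Hns : not_surj th.
  move: Hc; rewrite E eqEsubset subsetT /= => /subsetPn [j _ Hj].
  exists j => i; apply: contraNneq Hj => <-.
  rewrite !inE /= /th2_f; case: (i == ord0); by rewrite eqxx ?orbT.
rewrite -Ech /y2 /star; apply: cls_eq; first exact: Sd_equiv.
apply: rst_sym; apply: rst_step; exists 1, 2, th, iota2, c1; split => //.
by rewrite notsurj_bp.
Qed.

Lemma vert_eq (c c' : Chain 0 2) :
  (c ord0 == setT) = (c' ord0 == setT) -> y2 c = y2 c'.
Proof.
case: (boolP (c ord0 == setT)) => H1 H2.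
- congr y2; apply: chain_eq => i; rewrite (I1_eq i ord0).
  by rewrite (eqP H1); symmetry; apply/eqP; rewrite -H2.
- by rewrite !vert_star // -H2.
Qed.

Section NSQ.
Variable R : forall n, Y n -> Y n -> Prop.
Hypothesis HR : compat_equiv Y R.
Hypothesis Hns : nonsingular (quotS Y R).

Lemma Zact_cls m n (t : Hom m n) (y : Y n) :
  sact (s := quotS Y R) t (cls (@R n) y) = cls (@R m) (sact t y).
Proof.
case: HR => Heq Hc; rewrite /=; apply: cls_eq; first exact: Heq.
apply: Hc; apply: (equiv_sym _ _ (Heq n)); exact: rep_cls (Heq n) y.
Qed.

Lemma Z_simp : is_simplicial (quotS Y R).
Proof.
case: (Y_simp X2) => Hid Hcomp.
split.
- move=> n; apply: quot_ind => y; by rewrite Zact_cls Hid.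
- move=> m n p f g; apply: quot_ind => y; by rewrite !Zact_cls Hcomp.
Qed.

Lemma RNS n (y : Y n) k (f g : Hom k n) :
  (forall i, sact (cst (f i)) y = sact (cst (g i)) y) -> @R k (sact f y) (sact g y).
Proof.
move=> Hv; case: HR => Heq _; apply: (cls_inj (Heq k)).
rewrite -!Zact_cls; apply: (NS Z_simp Hns) => i.
by rewrite !Zact_cls Hv.
Qed.
End NSQ.


Lemma hmono k (h : Hom k 1) (i j : 'I_k.+1) : i <= j -> h i != ord0 -> h j != ord0.
Proof.
move=> le; have := homP h le; case: (h i) => [[|[|//]] p1] //=.
by case: (h j) => [[|[|//]] p2].
Qed.

Lemma inord_le k (a b : nat) : a <= b -> b <= k -> (inord a : 'I_k.+1) <= (inord b : 'I_k.+1).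
Proof. move=> ab bk; rewrite !inordK; lia. Qed.

Lemma inord_val' k (a : nat) : a <= k -> nat_of_ord (inord a : 'I_k.+1) = a.
Proof. move=> ak; rewrite inordK //; lia. Qed.

Definition mkTh_f k (h : Hom k 1) (T : {set 'I_3}) (i : 'I_k.+1) :=
  if h i != ord0 then setT else T.

Lemma mkTh_ne k (h : Hom k 1) T : T != set0 -> forall i, mkTh_f h T i != set0.
Proof. by move=> HT i; rewrite /mkTh_f; case: ifP => _ //; exact: setT_ne. Qed.

Lemma mkTh_mono k (h : Hom k 1) T (i j : 'I_k.+1) : i <= j -> mkTh_f h T i \subset mkTh_f h T j.
Proof.
move=> le; rewrite /mkTh_f; case: ifP => Hi; first by rewrite (hmono le Hi).
by case: ifP => _; rewrite ?subsetT.
Qed.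

Definition mkTh k (h : Hom k 1) T (HT : T != set0) : Chain k 2 :=
  MkChain (mkTh_ne h HT) (@mkTh_mono k h T).

Lemma set0_ne : [set (ord0 : 'I_3)] != set0.
Proof. by apply/set0Pn; exists ord0; rewrite inE. Qed.

Lemma set0_nT : [set (ord0 : 'I_3)] != setT.
Proof. apply/eqP => /setP /(_ ord_max); by rewrite !inE. Qed.

Definition canon k (h : Hom k 1) : Y k := y2 (mkTh h set0_ne).

Lemma phi_mkTh k (h : Hom k 1) T (HT : T != set0) : T != setT -> phi (y2 (mkTh h HT)) = h.
Proof.
move=> HT'; apply: hom1_eq => i; rewrite phi_y2 /= /mkTh_f.
by case: ifP => _; rewrite ?eqxx // (negbTE HT').
Qed.

Lemma phi_canon k (h : Hom k 1) : phi (canon h) = h.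
Proof. apply: phi_mkTh; exact: set0_nT. Qed.

Section L2.
Variable R : forall n, Y n -> Y n -> Prop.
Hypothesis HR : compat_equiv Y R.
Hypothesis Hns : nonsingular (quotS Y R).

Section E.
Variables (k : nat) (d : Chain k 2) (h : Hom k 1) (T : {set 'I_3}).
Hypotheses (HT0 : T != set0) (HT1 : T != setT)
  (Hh : forall i, (d i == setT) = (h i != ord0))
  (Hsub : forall i, h i == ord0 -> d i \subset T).

Definition e_f (j : 'I_(k.+1 + k).+1) : {set 'I_3} :=
  if j <= k then (if h (inord j) != ord0 then T else d (inord j))
  else (if h (inord (j - k.+1)) != ord0 then setT else T).

Lemma e_ne j : e_f j != set0.
Proof.
rewrite /e_f; case: ifP => _; case: ifP => _ //; [exact: ch_ne | exact: setT_ne].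
Qed.

Lemma e_mono (j j' : 'I_(k.+1 + k).+1) : j <= j' -> e_f j \subset e_f j'.
Proof.
move=> le; rewrite /e_f.
have Hd : forall i, h i == ord0 -> d i \subset T := Hsub.
case: (boolP (j <= k)) => hj; case: (boolP (j' <= k)) => hj'.
-   have le' : (inord j : 'I_k.+1) <= (inord j' : 'I_k.+1) by apply: inord_le; lia.
  case: ifP => H1.
  + by rewrite (hmono le' H1).
  + case: ifP => H2; first by apply: Hd; exact: negbFE H1.
    exact: ch_mono.
- have Hl : (if h (inord j) != ord0 then T else d (inord j)) \subset T.
    by case: ifP => H1 //; apply: Hd; exact: negbFE H1.
  apply: subset_trans Hl _; by case: ifP => _; rewrite ?subsetT.
-   lia.
-   have le' : (inord (j - k.+1) : 'I_k.+1) <= (inord (j' - k.+1) : 'I_k.+1).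
    have := ltn_ord j; have := ltn_ord j' => ? ?.
    apply: inord_le; lia.
  case: ifP => H1; first by rewrite (hmono le' H1).
  by case: ifP => _; rewrite ?subsetT.
Qed.

Definition e_ch : Chain (k.+1 + k) 2 := MkChain e_ne e_mono.

Definition f_f (i : 'I_k.+1) : 'I_(k.+1 + k).+1 :=
  inord (if h i != ord0 then k.+1 + i else i).
Definition g_f (i : 'I_k.+1) : 'I_(k.+1 + k).+1 := inord (k.+1 + i).

Lemma f_mono : ord_mono f_f.
Proof.
move=> i j le; rewrite /f_f; have := ltn_ord i; have := ltn_ord j => ? ?.
case: ifP => Hi; first rewrite (hmono le Hi).
- by rewrite !inordK; lia.
- by case: ifP => _; rewrite !inordK; lia.
Qed.

Lemma g_mono : ord_mono g_f.
Proof.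
move=> i j le; rewrite /g_f; have := ltn_ord i; have := ltn_ord j => ? ?.
by rewrite !inordK; lia.
Qed.

Definition fH := MkHom f_mono.
Definition gH := MkHom g_mono.

Lemma e_f_f i : e_f (f_f i) = d i.
Proof.
have := ltn_ord i => ?.
rewrite /e_f /f_f; case: (boolP (h i != ord0)) => Hi.
- rewrite (@inord_val' (k.+1 + k)); last lia.
  have -> : (k.+1 + i <= k) = false by lia.
  have -> : (inord (k.+1 + i - k.+1) : 'I_k.+1) = i by apply: val_inj; rewrite /= inord_val'; lia.
  by rewrite Hi; symmetry; apply/eqP; rewrite Hh.
- rewrite (@inord_val' (k.+1 + k)); last lia.
  have -> : (i <= k) = true by lia.
  have -> : (inord i : 'I_k.+1) = i by apply: val_inj; rewrite /= inord_val'; lia.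
  by rewrite (negbTE Hi).
Qed.

Lemma e_g_f i : e_f (g_f i) = mkTh_f h T i.
Proof.
have := ltn_ord i => ?.
rewrite /e_f /g_f (@inord_val' (k.+1 + k)); last lia.
have -> : (k.+1 + i <= k) = false by lia.
by have -> : (inord (k.+1 + i - k.+1) : 'I_k.+1) = i by apply: val_inj; rewrite /= inord_val'; lia.
Qed.

Lemma L2 : @R k (y2 d) (y2 (mkTh h HT0)).
Proof.
have E1 : y2 d = sact fH (y2 e_ch).
  by rewrite Y_act_y2; congr y2; apply: chain_eq => i /=; rewrite e_f_f.
have E2 : y2 (mkTh h HT0) = sact gH (y2 e_ch).
  by rewrite Y_act_y2; congr y2; apply: chain_eq => i /=; rewrite e_g_f.
rewrite E1 E2; apply: RNS => // i.
rewrite !Y_act_y2; apply: vert_eq => /=.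
rewrite e_f_f e_g_f /mkTh_f Hh.
by case: ifP => _; rewrite ?eqxx // (negbTE HT1).
Qed.
End E.
End L2.


Lemma card_nT (X : {set 'I_3}) : #|X| <= 2 -> X != setT.
Proof. by move=> H; apply/eqP => E; move: H; rewrite E cardsT card_ord. Qed.

Section K1.
Variable R : forall n, Y n -> Y n -> Prop.
Hypothesis HR : compat_equiv Y R.
Hypothesis Hns : nonsingular (quotS Y R).

Lemma L3 k (h : Hom k 1) (S T : {set 'I_3}) (HS : S != set0) (HT : T != set0) :
  S \subset T -> T != setT -> @R k (y2 (mkTh h HS)) (y2 (mkTh h HT)).
Proof.
move=> ST HT1.
have SnT : S != setT.
  apply: contraNneq HT1 => ES; rewrite eqEsubset subsetT /=.
  by rewrite -ES.
apply: L2 => // i /=; rewrite /mkTh_f.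
- by case: ifP => _; rewrite ?eqxx // (negbTE SnT).
- by move=> /eqP ->; rewrite eqxx.
Qed.

Lemma Lconn k (h : Hom k 1) (T : {set 'I_3}) (HT : T != set0) :
  T != setT -> @R k (y2 (mkTh h HT)) (canon h).
Proof.
move=> HT1; case: HR => /(_ k) Heq _.
case/set0Pn: (HT) => t Ht.
have Hst : [set t] != set0 by apply/set0Pn; exists t; rewrite inE.
have H0t : [set ord0; t] != set0 by apply/set0Pn; exists ord0; rewrite !inE eqxx.
have H0tT : [set ord0; t] != setT by apply: card_nT; rewrite cards2; case: (_ != _).
have Hsub1 : [set t] \subset T by rewrite sub1set.
have Hsub2 : [set t] \subset [set ord0; t] by rewrite sub1set !inE eqxx orbT.
have Hsub3 : [set ord0] \subset [set ord0; t] by rewrite sub1set !inE eqxx.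
have R1 := L3 h Hst HT Hsub1 HT1.
have R2 := L3 h Hst H0t Hsub2 H0tT.
have R3 := L3 h set0_ne H0t Hsub3 H0tT.
rewrite /canon.
apply: (equiv_trans _ _ Heq) (equiv_sym _ _ Heq _ _ R1) _.
apply: (equiv_trans _ _ Heq) R2 _.
exact: (equiv_sym _ _ Heq _ _ R3).
Qed.

Lemma Rcanon k (y : Y k) : @R k y (canon (phi y)).
Proof.
case: (Y_gen y) => d ->.
set h := phi (y2 d).
have Hh : forall i, (d i == setT) = (h i != ord0) by move=> i; rewrite /h phi_y2.
case: (boolP [exists i, h i == ord0]) => Hex.
- case/existsP: Hex => i0 Hi0.
  have [j Hj Hjmax] := @arg_maxnP _ i0 (fun i : 'I_k.+1 => h i == ord0) (fun i : 'I_k.+1 => (i : nat)) Hi0.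
  have HT1 : d j != setT by rewrite Hh Hj.
  have R1 := @L2 R HR Hns k d h (d j) (ch_ne d j) HT1 Hh
    (fun i Hi => ch_mono d (Hjmax i Hi)).
  case: HR => /(_ k) Heq _.
  apply: (equiv_trans _ _ Heq) R1 _; exact: Lconn.
- apply: L2 => //; first exact: set0_nT.
  move=> i Hi; case/existsP: Hex; by exists i.
Qed.

Lemma K1 k (y y' : Y k) : phi y = phi y' -> @R k y y'.
Proof.
move=> E; case: HR => /(_ k) Heq _.
apply: (equiv_trans _ _ Heq) (Rcanon y) _; rewrite E.
exact: (equiv_sym _ _ Heq _ _ (Rcanon y')).
Qed.
End K1.


Definition Rphi n (y y' : Y n) : Prop := phi y = phi y'.

Lemma Rphi_equiv n : equivalence _ (@Rphi n).
Proof.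
constructor.
- by move=> y.
- by move=> x y z; rewrite /Rphi => -> .
- by move=> x y; rewrite /Rphi => ->.
Qed.

Lemma Rphi_compat : compat_equiv Y Rphi.
Proof.
split; first exact: Rphi_equiv.
by move=> m n t y y'; rewrite /Rphi !phi_act => ->.
Qed.

Lemma phi_rep n (y : Y n) : phi (rep (cls (@Rphi n) y)) = phi y.
Proof. symmetry; exact: rep_cls (Rphi_equiv n) y. Qed.

Lemma degen_phi n (P : quotS Y Rphi n) m (s : Hom n m) (dl : Hom m n) :
  m < n -> (forall i, phi (rep P) (dl (s i)) = phi (rep P) i) ->
  degenerate P.
Proof.
move=> mn H; exists m, s, (cls (@Rphi m) (sact dl (rep P))); split => //.
rewrite -[LHS](cls_rep P) /=; apply: cls_eq; first exact: Rphi_equiv.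
rewrite /Rphi phi_act phi_rep phi_act; apply: hom_eq => i; exact: (esym (H i)).
Qed.

Lemma phi_sand n (h : Hom n 1) (i : 'I_n.+1) : h ord0 <= h i <= h ord_max.
Proof. by rewrite !(homP h) // -ltnS ltn_ord. Qed.

Definition dl1_f n (i : 'I_2) : 'I_n.+1 := if i == ord0 then ord0 else ord_max.
Lemma dl1_mono n : ord_mono (@dl1_f n).
Proof. by move=> [[|[|//]] p1] [[|[|//]] p2] //= _; rewrite /dl1_f /= ?leqnn // leq0n. Qed.

Lemma dl1_retr n (h : Hom n 1) i : h (@dl1_f n (h i)) = h i.
Proof.
have := phi_sand h i; rewrite /dl1_f.
case: (h i) => [[|[|//]] p] /= H.
- apply: val_inj => /=; move: H; case: (h ord0) => [[|[|//]] ?] //.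
- apply: val_inj => /=; move: H; case: (h ord_max) => [[|[|//]] ?] /=; rewrite ?andbF // => /andP [].
Qed.

Lemma const_retr n (h : Hom n 1) i : h ord0 == h ord_max -> h ord0 = h i.
Proof.
move=> /eqP Hc; have := phi_sand h i; rewrite -Hc => H.
apply: val_inj; apply/eqP; rewrite eqn_leq; exact: H.
Qed.

Definition s0_f n (i : 'I_n.+1) : 'I_1 := ord0.
Lemma s0_mono n : ord_mono (@s0_f n).
Proof. by []. Qed.

Lemma Rphi_ns : nonsingular (quotS Y Rphi).
Proof.
move=> n P Hnd k f g E.
set hP := phi (rep P).
have Hfg : hom_comp hP f = hom_comp hP g.
  have := cls_inj (Rphi_equiv k) E; by rewrite /Rphi !phi_act.
have inj : forall a b, hP a = hP b -> a = b.
  have [n2|n2] := leqP 2 n.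
    exfalso; apply: Hnd; apply: (@degen_phi n P 1 hP (MkHom (@dl1_mono n))) => // i.
    exact: dl1_retr.
  case: (boolP (hP ord0 == hP ord_max)) => Hc.
  - case: (posnP n) => [n0|n0].
      move=> a b _; apply: val_inj => /=; have := ltn_ord a; have := ltn_ord b; lia.
    exfalso; apply: Hnd; apply: (@degen_phi n P 0 (MkHom (@s0_mono n)) (cst ord0)) => // i.
    exact: const_retr.
  - move=> a b Eab; apply: val_inj => /=; apply/eqP; apply/negPn/negP => Hab.
    have H01 : (a = ord0 /\ b = ord_max) \/ (a = ord_max /\ b = ord0).
      have := ltn_ord a; have := ltn_ord b => ? ?.
      have [a0|a0] := posnP a.
      + left; split; apply: val_inj => /=; lia.
      + right; split; apply: val_inj => /=; lia.
    case: H01 => [[Ea Eb]|[Ea Eb]]; subst; by rewrite Eab eqxx in Hc.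
apply: hom_eq => i; apply: inj.
by have := f_equal (fun h : Hom k 1 => h i) Hfg.
Qed.

Definition iphi : DIndex Y := exist _ Rphi (conj Rphi_compat Rphi_ns).

Lemma Dmap_eq k (y y' : Y k) : Dmap y = Dmap y' <-> phi y = phi y'.
Proof.
split.
- move=> E; have := f_equal (fun p => p iphi) E => /= E'.
  exact: (cls_inj (Rphi_equiv k) E').
- move=> E; apply: functional_extensionality_dep => -[R [HRc Hn]] /=.
  rewrite /Dmap /=; apply: cls_eq; first exact: (HRc.1 k).
  exact: K1.
Qed.

Definition Fw k (p : Desing Y k) : Y k :=
  proj1_sig (constructive_indefinite_description _ (proj2_sig p)).

Lemma Fw_spec k (p : Desing Y k) : proj1_sig p = Dmap (Fw p).
Proof. rewrite /Fw; by case: (constructive_indefinite_description _ _). Qed.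

Definition Ff k (p : Desing Y k) : Delta 1 k := phi (Fw p).

Lemma Ff_nat m n (f : Hom m n) (p : Desing Y n) :
  Ff (sact f p) = sact f (Ff p).
Proof.
rewrite /Ff /=; rewrite -phi_act; apply/Dmap_eq.
rewrite -Fw_spec -Dmap_nat -Fw_spec /=.
by [].
Qed.

Definition Gf k (h : Delta 1 k) : Desing Y k :=
  exist _ (Dmap (canon h)) (ex_intro _ (canon h) erefl).

Lemma Gf_nat m n (f : Hom m n) (h : Delta 1 n) :
  Gf (sact f h) = sact f (Gf h).
Proof.
apply: eq_sig_hprop => [x p q|]; first exact: proof_irrelevance.
have -> : sval (sact f (Gf h)) = sact (s := DProd Y) f (Dmap (canon h)) by [].
rewrite Dmap_nat; apply/Dmap_eq.
by rewrite phi_act !phi_canon.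
Qed.

Theorem mainTheorem10 : sIso (Desing (Sd X2)) (Delta 1).
Proof.
exists (MkSMap Ff_nat), (MkSMap Gf_nat); split => /=.
- move=> n p; apply: eq_sig_hprop => [x p1 q|]; first exact: proof_irrelevance.
  rewrite /= Fw_spec; apply/Dmap_eq; by rewrite phi_canon.
- move=> n h; rewrite /Ff; have E := Fw_spec (Gf h).
  have := E; rewrite /= => /Dmap_eq <-; exact: phi_canon.
Qed.
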